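(* Let $J$ be a unital Jordan algebra, $\mathfrak g=Lie(J)$, $\hat{\mathfrak g}$ its universal central extension and $\gamma:\hat{\mathfrak g}\to\mathfrak g$ the canonical projection. Let $M$ be a unital $J$-bimodule, $\mathcal A=Lie(J\oplus M)$ where $J\oplus M$ is the null split extension, and let $0\to N\to\mathcal A\xrightarrow{\pi}\mathfrak g\to0$ be the induced exact sequence of Lie algebras. Then there exists a Lie algebra homomorphism $s:\hat{\mathfrak g}\to\mathcal A$ with $\pi\circ s=\gamma$.
   Context: The field $\mathbf k$ has characteristic $\neq2$. $Lie(J)$ denotes the Tits–Kantor–Koecher Lie algebra with short grading $\mathfrak g_{-1}\oplus\mathfrak g_0\oplus\mathfrak g_1$, $\mathfrak g_{-1}=J$, $\mathfrak g_0\subset\mathrm{End}(J)$ spanned by left multiplications $L_a$ and commutators $[L_a,L_b]$, $\mathfrak g_1\subset\mathrm{Hom}(S^2J,J)$ spanned by $P(x,y)=x\circ y$ and $[L_a,P]$, with the natural bracket; it is generated by $\mathfrak g_{-1}\oplus\mathfrak g_1$. The null split extension of $J$ by a bimodule $M$ is the Jordan algebra $J\oplus M$ with $(a_1+m_1)(a_2+m_2)=a_1\circ a_2+a_1\cdot m_2+m_1\cdot a_2$; for unital $M$ (unit of $J$ acts as identity) it is unital. The map $\pi:Lie(J\oplus M)\to Lie(J)$ is induced by the epimorphism $J\oplus M\to J$; its kernel $N$ is an abelian ideal with $N_{-1}=M$. *)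

(* Defs.v *)
From HB Require Import structures.
From mathcomp Require Import all_boot all_order all_algebra.
Set Implicit Arguments. Unset Strict Implicit. Unset Printing Implicit Defensive.
Import GRing.Theory.
Local Open Scope ring_scope.

Section Defs.
Variable K : fieldType.

Definition is_jordan (V : lmodType K) (mul : V -> V -> V) : Prop :=
  [/\ forall (c : K) (x y z : V), mul (c *: x + y) z = c *: mul x z + mul y z,
      forall x y : V, mul x y = mul y x &
      forall x y : V, mul (mul (mul x x) y) x = mul (mul x x) (mul y x)].

Definition is_unit (V : lmodType K) (mul : V -> V -> V) (e : V) : Prop :=
  forall x, mul e x = x.

(* Null split extension J (+) M: (a1+m1)(a2+m2) = a1 a2 + a1.m2 + a2.m1
   (Jordan bimodules have m.a = a.m, so a single action is used). *)
Definition nse_mul (J M : lmodType K) (mul : J -> J -> J) (act : J -> M -> M)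
  (u v : J * M) : J * M :=
  (mul u.1 v.1, act u.1 v.2 + act v.1 u.2).

Definition is_bimodule (J M : lmodType K) (mul : J -> J -> J) (act : J -> M -> M)
  : Prop := is_jordan (nse_mul mul act).

(* The Tits-Kantor-Koecher algebra Lie(J) = g_-1 + g_0 + g_1,           *)
(* g_-1 = J, g_0 in End(J), g_1 in Hom(S^2 J, J); an element is a       *)
(* triple (a, D, Q).                                                    *)

Definition tkk (V : lmodType K) : Type := (V * (V -> V) * (V -> V -> V))%type.

Definition tkk_zero (V : lmodType K) : tkk V := (0, fun _ => 0, fun _ _ => 0).
Definition tkk_add (V : lmodType K) (X Y : tkk V) : tkk V :=
  (X.1.1 + Y.1.1, fun x => X.1.2 x + Y.1.2 x, fun x y => X.2 x y + Y.2 x y).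
Definition tkk_scale (V : lmodType K) (c : K) (X : tkk V) : tkk V :=
  (c *: X.1.1, fun x => c *: X.1.2 x, fun x y => c *: X.2 x y).

Definition Lmul (V : lmodType K) (mul : V -> V -> V) (a : V) : V -> V :=
  fun x => mul a x.
Definition ecomm (V : lmodType K) (D1 D2 : V -> V) : V -> V :=
  fun x => D1 (D2 x) - D2 (D1 x).
Definition dact (V : lmodType K) (D : V -> V) (Q : V -> V -> V) : V -> V -> V :=
  fun x y => D (Q x y) - Q (D x) y - Q x (D y).

(* The natural graded bracket: [D,a] = D a, [D1,D2] = D1 D2 - D2 D1,
   [Q,a] = Q(a,-), [D,Q] = D.Q, [g_1,g_1] = 0 (short grading). *)
Definition tkk_br (V : lmodType K) (X Y : tkk V) : tkk V :=
  let: (a1, D1, Q1) := X in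
  let: (a2, D2, Q2) := Y in
  (D1 a2 - D2 a1,
   fun x => ecomm D1 D2 x + Q1 a2 x - Q2 a1 x,
   fun x y => dact D1 Q2 x y - dact D2 Q1 x y).

Definition in_span1 (V : lmodType K) (gens : (V -> V) -> Prop) (D : V -> V) : Prop :=
  exists n (c : 'I_n -> K) (g : 'I_n -> V -> V),
    (forall i, gens (g i)) /\ forall x, D x = \sum_(i < n) c i *: g i x.
Definition in_span2 (V : lmodType K) (gens : (V -> V -> V) -> Prop)
  (Q : V -> V -> V) : Prop :=
  exists n (c : 'I_n -> K) (g : 'I_n -> V -> V -> V),
    (forall i, gens (g i)) /\ forall x y, Q x y = \sum_(i < n) c i *: g i x y.

Definition g0_gen (V : lmodType K) (mul : V -> V -> V) (D : V -> V) : Prop :=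
  (exists a, forall x, D x = Lmul mul a x) \/
  (exists a b, forall x, D x = ecomm (Lmul mul a) (Lmul mul b) x).
(* generators of g_1: P(x,y) = x o y and [L_a, P] *)
Definition g1_gen (V : lmodType K) (mul : V -> V -> V) (Q : V -> V -> V) : Prop :=
  (forall x y, Q x y = mul x y) \/
  (exists a, forall x y, Q x y = dact (Lmul mul a) mul x y).

Definition in_Lie (V : lmodType K) (mul : V -> V -> V) (X : tkk V) : Prop :=
  in_span1 (g0_gen mul) X.1.2 /\ in_span2 (g1_gen mul) X.2.

Definition tkk_proj (J M : lmodType K) (X : tkk (J * M)%type) : tkk J :=
  (X.1.1.1, fun x => (X.1.2 (x, 0)).1, fun x y => (X.2 (x, 0) (y, 0)).1).

End Defs.

Record lieAlgType (K : fieldType) := LieAlg {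
  lie_sort :> lmodType K;
  lie_br : lie_sort -> lie_sort -> lie_sort;
  lie_brDl : forall (c : K) (x y z : lie_sort),
      lie_br (c *: x + y) z = c *: lie_br x z + lie_br y z;
  lie_brDr : forall (c : K) (x y z : lie_sort),
      lie_br z (c *: x + y) = c *: lie_br z x + lie_br z y;
  lie_alt : forall x : lie_sort, lie_br x x = 0;
  lie_jacobi : forall x y z : lie_sort,
      lie_br x (lie_br y z) + lie_br y (lie_br z x) + lie_br z (lie_br x y) = 0
}.
Arguments lie_br {K} _ _ _.

Section Ext.
Variable K : fieldType.

Definition lie_hom (G H : lieAlgType K) (f : G -> H) : Prop :=
  (forall (c : K) x y, f (c *: x + y) = c *: f x + f y) /\
  (forall x y, f (lie_br G x y) = lie_br H (f x) (f y)).

Definition tkk_hom (V : lmodType K) (mul : V -> V -> V) (G : lieAlgType K)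
  (f : G -> tkk V) : Prop :=
  [/\ forall (c : K) x y, f (c *: x + y) = tkk_add (tkk_scale c (f x)) (f y),
      forall x, in_Lie mul (f x) &
      forall x y, f (lie_br G x y) = tkk_br (f x) (f y)].

Definition central_ext (V : lmodType K) (mul : V -> V -> V) (E : lieAlgType K)
  (phi : E -> tkk V) : Prop :=
  [/\ tkk_hom mul phi,
      forall X, in_Lie mul X -> exists e, phi e = X &
      forall z, phi z = tkk_zero V -> forall e, lie_br E z e = 0].

Definition universal_central_ext (V : lmodType K) (mul : V -> V -> V)
  (G : lieAlgType K) (gamma : G -> tkk V) : Prop :=
  central_ext mul gamma /\
  forall (E : lieAlgType K) (phi : E -> tkk V), central_ext mul phi ->
    exists f : G -> E, [/\ lie_hom f, (forall x, phi (f x) = gamma x) &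
      forall f' : G -> E, lie_hom f' -> (forall x, phi (f' x) = gamma x) ->
        forall x, f' x = f x].

End Ext.

(* Main.v *)
From HB Require Import structures.
From mathcomp Require Import all_boot all_order all_algebra.
From mathcomp Require Import ring boolp.
Require Import Defs.
Set Implicit Arguments. Unset Strict Implicit. Unset Printing Implicit Defensive.
Import GRing.Theory.
Local Open Scope ring_scope.

Definition dual (V : zmodType) : Type := (int * V)%type.
HB.instance Definition _ (V : zmodType) := GRing.Zmodule.on (dual V).
Section D.
Variable V : zmodType.
Definition dmul (x y : dual V) : dual V := (x.1 * y.1, y.2 *~ x.1 + x.2 *~ y.1).
Definition done_ : dual V := (1, 0).
Lemma dmulA : associative dmul.
Proof. move=> [a u] [b v] [c w]; rewrite /dmul /=; congr pair; first by rewrite mulrA.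
rewrite !mulrzDl !mulrzA -!addrA; congr (_ + _); first by rewrite mulrzAC.
by rewrite (mulrzAC c a v). Qed.
Lemma dmulC : commutative dmul.
Proof. move=> [a u] [b v]; rewrite /dmul /= mulrC addrC //. Qed.
Lemma dmul1 : left_id done_ dmul.
Proof. by move=> [a u]; rewrite /dmul /= mul1r mul0rz addr0 mulr1z. Qed.
Lemma dmulDl : left_distributive dmul +%R.
Proof. move=> [a u] [b v] [c w]; rewrite /dmul /=; congr pair; first by rewrite mulrDl.
rewrite mulrzDl mulrzDr_tmp -!addrA; congr (_+_); rewrite addrCA //. Qed.
Lemma done_neq0 : done_ != 0.
Proof. by rewrite /done_; apply/eqP; case. Qed.
End D.
HB.instance Definition _ (V : zmodType) :=
  GRing.Zmodule_isComNzRing.Build (dual V) (@dmulA V) (@dmulC V) (@dmul1 V) (@dmulDl V) (@done_neq0 V).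
Definition dinj (V : zmodType) (v : V) : dual V := (0, v).
Lemma dinj_add (V : zmodType) : additive (@dinj V).
Proof. by move=> x y; rewrite /dinj. Qed.
HB.instance Definition _ (V : zmodType) := GRing.isAdditive.Build V (dual V) (@dinj V) (@dinj_add V).
Lemma dinj_inj (V : zmodType) : injective (@dinj V).
Proof. by move=> x y []. Qed.
Ltac zring := apply: (@dinj_inj _); ring.

Lemma test (V : zmodType) (a b c : V) : a + b - (c - a) + c = b + a *+ 2.
Proof. zring. Qed.

Section JA.
Variables (K : fieldType) (V : lmodType K) (mul : V -> V -> V).
Hypothesis hJ : is_jordan mul.
Hypothesis h2 : (2%:R : K) != 0.

Lemma jmulZDl c x y z : mul (c *: x + y) z = c *: mul x z + mul y z.
Proof. by case: hJ. Qed.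
Lemma jmulC x y : mul x y = mul y x.
Proof. by case: hJ. Qed.
Lemma jordan x y : mul (mul (mul x x) y) x = mul (mul x x) (mul y x).
Proof. by case: hJ. Qed.
Lemma jmulDl x y z : mul (x + y) z = mul x z + mul y z.
Proof. by have := jmulZDl 1 x y z; rewrite !scale1r. Qed.
Lemma jmul0l z : mul 0 z = 0.
Proof. have h := jmulDl 0 0 z; rewrite addr0 in h. by apply: (addrI (mul 0 z)); rewrite addr0 -h. Qed.
Lemma jmulZl c x z : mul (c *: x) z = c *: mul x z.
Proof. by rewrite -[c *: x]addr0 jmulZDl jmul0l addr0. Qed.
Lemma jmulNl x z : mul (- x) z = - mul x z.
Proof. by rewrite -scaleN1r jmulZl scaleN1r. Qed.
Lemma jmulBl x y z : mul (x - y) z = mul x z - mul y z.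
Proof. by rewrite jmulDl jmulNl. Qed.
Lemma jmulDr x y z : mul z (x + y) = mul z x + mul z y.
Proof. by rewrite jmulC jmulDl !(jmulC z). Qed.
Lemma jmulZr c x z : mul z (c *: x) = c *: mul z x.
Proof. by rewrite jmulC jmulZl jmulC. Qed.
Lemma jmulNr x z : mul z (- x) = - mul z x.
Proof. by rewrite jmulC jmulNl jmulC. Qed.
Lemma jmulBr x y z : mul z (x - y) = mul z x - mul z y.
Proof. by rewrite jmulDr jmulNr. Qed.
Lemma jmul0r z : mul z 0 = 0.
Proof. by rewrite jmulC jmul0l. Qed.

Lemma two_cancel (x : V) : x *+ 2 = 0 -> x = 0.
Proof.
move=> h; have : (2%:R : K) *: x = 0 by rewrite scaler_nat.
by move/eqP; rewrite scaler_eq0 (negbTE h2) /= => /eqP.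
Qed.

Lemma comb3 (k1 k2 k3 : int) (a1 b1 a2 b2 a3 b3 g : V) : a1 = b1 -> a2 = b2 -> a3 = b3 ->
  g = (a1 - b1) *~ k1 + (a2 - b2) *~ k2 + (a3 - b3) *~ k3 -> g = 0.
Proof. by move=> -> -> -> ->; rewrite !subrr !mul0rz !addr0. Qed.
Lemma comb2 (k1 k2 : int) (a1 b1 a2 b2 g : V) : a1 = b1 -> a2 = b2 ->
  g = (a1 - b1) *~ k1 + (a2 - b2) *~ k2 -> g = 0.
Proof. by move=> -> -> ->; rewrite !subrr !mul0rz !addr0. Qed.

Lemma F1 x z y : mul (mul (mul x x) y) z + (mul (mul (mul x z) y) x) *+ 2
  = (mul (mul x z) (mul y x)) *+ 2 + mul (mul x x) (mul y z).
Proof.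
have j1 := jordan (x + z) y; have j2 := jordan (x - z) y; have j3 := jordan z y.
rewrite !(jmulDl, jmulDr, jmulNl, jmulNr, opprK) in j1 j2.
rewrite ?(jmulC z x) in j1 j2.
apply/eqP; rewrite -subr_eq0; apply/eqP; apply: two_cancel.
apply: (comb3 (k1:=1) (k2:=-1) (k3:=-2) j1 j2 j3); zring.
Qed.

Lemma LJ x w z y : mul (mul (mul x w) y) z + mul (mul (mul x z) y) w + mul (mul (mul w z) y) x
  = mul (mul x z) (mul y w) + mul (mul w z) (mul y x) + mul (mul x w) (mul y z).
Proof.
have f1 := F1 (x + w) z y; have f2 := F1 x z y; have f3 := F1 w z y.
rewrite !(jmulDl, jmulDr) in f1. rewrite ?(jmulC w x) in f1.
apply/eqP; rewrite -subr_eq0; apply/eqP; apply: two_cancel.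
apply: (comb3 (k1:=1) (k2:=-1) (k3:=-1) f1 f2 f3); zring.
Qed.
Lemma DER0 a b x y : mul a (mul b (mul x y)) - mul b (mul a (mul x y))
  = mul (mul a (mul b x)) y - mul (mul b (mul a x)) y + (mul x (mul a (mul b y)) - mul x (mul b (mul a y))).
Proof.
have hh1 := LJ a x y b; have hh2 := LJ b x y a.
rewrite ?(jmulC b a) in hh1; rewrite ?(jmulC b a) in hh2; rewrite ?(jmulC b a).
rewrite ?(jmulC (mul a x) b) in hh1; rewrite ?(jmulC (mul a x) b) in hh2; rewrite ?(jmulC (mul a x) b).
rewrite ?(jmulC (mul a y) b) in hh1; rewrite ?(jmulC (mul a y) b) in hh2; rewrite ?(jmulC (mul a y) b).
rewrite ?(jmulC (mul x y) b) in hh1; rewrite ?(jmulC (mul x y) b) in hh2; rewrite ?(jmulC (mul x y) b).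
rewrite ?(jmulC (mul x y) (mul a b)) in hh1; rewrite ?(jmulC (mul x y) (mul a b)) in hh2; rewrite ?(jmulC (mul x y) (mul a b)).
rewrite ?(jmulC (mul b x) a) in hh1; rewrite ?(jmulC (mul b x) a) in hh2; rewrite ?(jmulC (mul b x) a).
rewrite ?(jmulC (mul b y) a) in hh1; rewrite ?(jmulC (mul b y) a) in hh2; rewrite ?(jmulC (mul b y) a).
rewrite ?(jmulC (mul x y) a) in hh1; rewrite ?(jmulC (mul x y) a) in hh2; rewrite ?(jmulC (mul x y) a).
rewrite ?(jmulC (mul b y) (mul a x)) in hh1; rewrite ?(jmulC (mul b y) (mul a x)) in hh2; rewrite ?(jmulC (mul b y) (mul a x)).
rewrite ?(jmulC (mul b x) (mul a y)) in hh1; rewrite ?(jmulC (mul b x) (mul a y)) in hh2; rewrite ?(jmulC (mul b x) (mul a y)).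
rewrite ?(jmulC (mul a (mul b x)) y) in hh1; rewrite ?(jmulC (mul a (mul b x)) y) in hh2; rewrite ?(jmulC (mul a (mul b x)) y).
rewrite ?(jmulC (mul b (mul a x)) y) in hh1; rewrite ?(jmulC (mul b (mul a x)) y) in hh2; rewrite ?(jmulC (mul b (mul a x)) y).
rewrite ?(jmulC (mul b (mul a y)) x) in hh1; rewrite ?(jmulC (mul b (mul a y)) x) in hh2; rewrite ?(jmulC (mul b (mul a y)) x).
rewrite ?(jmulC (mul b (mul x y)) a) in hh1; rewrite ?(jmulC (mul b (mul x y)) a) in hh2; rewrite ?(jmulC (mul b (mul x y)) a).
rewrite ?(jmulC (mul a (mul b y)) x) in hh1; rewrite ?(jmulC (mul a (mul b y)) x) in hh2; rewrite ?(jmulC (mul a (mul b y)) x).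
rewrite ?(jmulC (mul a (mul x y)) b) in hh1; rewrite ?(jmulC (mul a (mul x y)) b) in hh2; rewrite ?(jmulC (mul a (mul x y)) b).
apply/eqP; rewrite -subr_eq0; apply/eqP.
apply: (comb2 (k1:=1) (k2:=-1) hh1 hh2); zring.
Qed.
Definition Qf (b x y : V) := mul (mul b x) y + mul x (mul b y) - mul b (mul x y).
Lemma JID2 a b x y : mul a (Qf b x y) - Qf b (mul a x) y - Qf b x (mul a y) = - Qf (mul a b) x y.
Proof.
rewrite /Qf !(jmulDr, jmulBr, jmulNr).
have hh1 := LJ a b x y; have hh2 := LJ a b y x; have hh3 := LJ a x y b.
rewrite ?(jmulC y b) in hh1; rewrite ?(jmulC y b) in hh2; rewrite ?(jmulC y b) in hh3; rewrite ?(jmulC y b).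
rewrite ?(jmulC y a) in hh1; rewrite ?(jmulC y a) in hh2; rewrite ?(jmulC y a) in hh3; rewrite ?(jmulC y a).
rewrite ?(jmulC y x) in hh1; rewrite ?(jmulC y x) in hh2; rewrite ?(jmulC y x) in hh3; rewrite ?(jmulC y x).
rewrite ?(jmulC x b) in hh1; rewrite ?(jmulC x b) in hh2; rewrite ?(jmulC x b) in hh3; rewrite ?(jmulC x b).
rewrite ?(jmulC x a) in hh1; rewrite ?(jmulC x a) in hh2; rewrite ?(jmulC x a) in hh3; rewrite ?(jmulC x a).
rewrite ?(jmulC b a) in hh1; rewrite ?(jmulC b a) in hh2; rewrite ?(jmulC b a) in hh3; rewrite ?(jmulC b a).
rewrite ?(jmulC (mul b x) y) in hh1; rewrite ?(jmulC (mul b x) y) in hh2; rewrite ?(jmulC (mul b x) y) in hh3; rewrite ?(jmulC (mul b x) y).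
rewrite ?(jmulC (mul a x) y) in hh1; rewrite ?(jmulC (mul a x) y) in hh2; rewrite ?(jmulC (mul a x) y) in hh3; rewrite ?(jmulC (mul a x) y).
rewrite ?(jmulC (mul b x) (mul a y)) in hh1; rewrite ?(jmulC (mul b x) (mul a y)) in hh2; rewrite ?(jmulC (mul b x) (mul a y)) in hh3; rewrite ?(jmulC (mul b x) (mul a y)).
rewrite ?(jmulC (mul a b) x) in hh1; rewrite ?(jmulC (mul a b) x) in hh2; rewrite ?(jmulC (mul a b) x) in hh3; rewrite ?(jmulC (mul a b) x).
rewrite ?(jmulC (mul a b) y) in hh1; rewrite ?(jmulC (mul a b) y) in hh2; rewrite ?(jmulC (mul a b) y) in hh3; rewrite ?(jmulC (mul a b) y).
rewrite ?(jmulC (mul a y) x) in hh1; rewrite ?(jmulC (mul a y) x) in hh2; rewrite ?(jmulC (mul a y) x) in hh3; rewrite ?(jmulC (mul a y) x).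
rewrite ?(jmulC (mul b y) x) in hh1; rewrite ?(jmulC (mul b y) x) in hh2; rewrite ?(jmulC (mul b y) x) in hh3; rewrite ?(jmulC (mul b y) x).
rewrite ?(jmulC (mul b y) (mul a x)) in hh1; rewrite ?(jmulC (mul b y) (mul a x)) in hh2; rewrite ?(jmulC (mul b y) (mul a x)) in hh3; rewrite ?(jmulC (mul b y) (mul a x)).
rewrite ?(jmulC (mul a x) b) in hh1; rewrite ?(jmulC (mul a x) b) in hh2; rewrite ?(jmulC (mul a x) b) in hh3; rewrite ?(jmulC (mul a x) b).
rewrite ?(jmulC (mul a y) b) in hh1; rewrite ?(jmulC (mul a y) b) in hh2; rewrite ?(jmulC (mul a y) b) in hh3; rewrite ?(jmulC (mul a y) b).
rewrite ?(jmulC (mul x y) b) in hh1; rewrite ?(jmulC (mul x y) b) in hh2; rewrite ?(jmulC (mul x y) b) in hh3; rewrite ?(jmulC (mul x y) b).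
rewrite ?(jmulC (mul x y) (mul a b)) in hh1; rewrite ?(jmulC (mul x y) (mul a b)) in hh2; rewrite ?(jmulC (mul x y) (mul a b)) in hh3; rewrite ?(jmulC (mul x y) (mul a b)).
rewrite ?(jmulC (mul b (mul a x)) y) in hh1; rewrite ?(jmulC (mul b (mul a x)) y) in hh2; rewrite ?(jmulC (mul b (mul a x)) y) in hh3; rewrite ?(jmulC (mul b (mul a x)) y).
rewrite ?(jmulC (mul x (mul a b)) y) in hh1; rewrite ?(jmulC (mul x (mul a b)) y) in hh2; rewrite ?(jmulC (mul x (mul a b)) y) in hh3; rewrite ?(jmulC (mul x (mul a b)) y).
rewrite ?(jmulC (mul y (mul a b)) x) in hh1; rewrite ?(jmulC (mul y (mul a b)) x) in hh2; rewrite ?(jmulC (mul y (mul a b)) x) in hh3; rewrite ?(jmulC (mul y (mul a b)) x).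
rewrite ?(jmulC (mul y (mul a x)) b) in hh1; rewrite ?(jmulC (mul y (mul a x)) b) in hh2; rewrite ?(jmulC (mul y (mul a x)) b) in hh3; rewrite ?(jmulC (mul y (mul a x)) b).
rewrite ?(jmulC (mul y (mul b x)) a) in hh1; rewrite ?(jmulC (mul y (mul b x)) a) in hh2; rewrite ?(jmulC (mul y (mul b x)) a) in hh3; rewrite ?(jmulC (mul y (mul b x)) a).
rewrite ?(jmulC (mul x (mul a y)) b) in hh1; rewrite ?(jmulC (mul x (mul a y)) b) in hh2; rewrite ?(jmulC (mul x (mul a y)) b) in hh3; rewrite ?(jmulC (mul x (mul a y)) b).
rewrite ?(jmulC (mul x (mul b y)) a) in hh1; rewrite ?(jmulC (mul x (mul b y)) a) in hh2; rewrite ?(jmulC (mul x (mul b y)) a) in hh3; rewrite ?(jmulC (mul x (mul b y)) a).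
rewrite ?(jmulC (mul b (mul a y)) x) in hh1; rewrite ?(jmulC (mul b (mul a y)) x) in hh2; rewrite ?(jmulC (mul b (mul a y)) x) in hh3; rewrite ?(jmulC (mul b (mul a y)) x).
rewrite ?(jmulC (mul b (mul x y)) a) in hh1; rewrite ?(jmulC (mul b (mul x y)) a) in hh2; rewrite ?(jmulC (mul b (mul x y)) a) in hh3; rewrite ?(jmulC (mul b (mul x y)) a).
apply/eqP; rewrite -subr_eq0; apply/eqP.
apply: (comb3 (k1:=1) (k2:=1) (k3:=-1) hh1 hh2 hh3); zring.
Qed.
Lemma Qf_linb c b b' x y : Qf (c *: b + b') x y = c *: Qf b x y + Qf b' x y.
Proof.
rewrite /Qf !(jmulZDl, jmulDr, jmulZr, jmulZl, jmulDl) scalerBr scalerDr; zring.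
Qed.
End JA.

Section TK.
Variables (K : fieldType) (V : lmodType K).

Definition lin1 (D : V -> V) := forall (c : K) x y, D (c *: x + y) = c *: D x + D y.
Definition bil (Q : V -> V -> V) :=
  (forall (c : K) x y z, Q (c *: x + y) z = c *: Q x z + Q y z) /\ (forall x y, Q x y = Q y x).
Definition good (X : tkk V) := lin1 X.1.2 /\ bil X.2.

Lemma tkk_eq (X Y : tkk V) : X.1.1 = Y.1.1 -> X.1.2 =1 Y.1.2 ->
  (forall x y, X.2 x y = Y.2 x y) -> X = Y.
Proof.
case: X => [[a D] Q]; case: Y => [[a' D'] Q'] /= -> hD hQ.
rewrite (funext hD); congr pair; apply: funext => x; apply: funext => y; exact: hQ.
Qed.

Section L1.
Variable D : V -> V.
Hypothesis hD : lin1 D.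
Lemma lD x y : D (x + y) = D x + D y.
Proof. by have := hD 1 x y; rewrite !scale1r. Qed.
Lemma lZ c x : D (c *: x) = c *: D x.
Proof.
have h0 : D 0 = 0.
  have := lD 0 0; rewrite addr0 => h; by apply: (addrI (D 0)); rewrite addr0 -h.
by have := hD c x 0; rewrite addr0 h0 addr0.
Qed.
Lemma l0 : D 0 = 0.
Proof. by have := lZ 0 0; rewrite !scale0r. Qed.
Lemma lN x : D (- x) = - D x.
Proof. by rewrite -scaleN1r lZ scaleN1r. Qed.
Lemma lB x y : D (x - y) = D x - D y.
Proof. by rewrite lD lN. Qed.
End L1.

Section B2.
Variable Q : V -> V -> V.
Hypothesis hQ : bil Q.
Lemma bC x y : Q x y = Q y x.
Proof. by case: hQ. Qed.
Lemma blin z : lin1 (fun x => Q x z).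
Proof. by case: hQ => h _ c x y; rewrite h. Qed.
Lemma blinr z : lin1 (Q z).
Proof. by move=> c x y; rewrite !(bC z) (blin z). Qed.
Lemma bDl x y z : Q (x + y) z = Q x z + Q y z. Proof. exact: (lD (blin z)). Qed.
Lemma bDr x y z : Q z (x + y) = Q z x + Q z y. Proof. exact: (lD (blinr z)). Qed.
Lemma bNl x z : Q (- x) z = - Q x z. Proof. exact: (lN (blin z)). Qed.
Lemma bNr x z : Q z (- x) = - Q z x. Proof. exact: (lN (blinr z)). Qed.
Lemma bBl x y z : Q (x - y) z = Q x z - Q y z. Proof. exact: (lB (blin z)). Qed.
Lemma bBr x y z : Q z (x - y) = Q z x - Q z y. Proof. exact: (lB (blinr z)). Qed.
Lemma bZl c x z : Q (c *: x) z = c *: Q x z. Proof. exact: (lZ (blin z)). Qed.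
Lemma bZr c x z : Q z (c *: x) = c *: Q z x. Proof. exact: (lZ (blinr z)). Qed.
Lemma b0l z : Q 0 z = 0. Proof. exact: (l0 (blin z)). Qed.
Lemma b0r z : Q z 0 = 0. Proof. exact: (l0 (blinr z)). Qed.
End B2.

Lemma combV3 (k1 k2 k3 : int) (a1 b1 a2 b2 a3 b3 g : V) : a1 = b1 -> a2 = b2 -> a3 = b3 ->
  g = (a1 - b1) *~ k1 + (a2 - b2) *~ k2 + (a3 - b3) *~ k3 -> g = 0.
Proof. by move=> -> -> -> ->; rewrite !subrr !mul0rz !addr0. Qed.

Lemma tkk_jacobi (X Y Z : tkk V) : good X -> good Y -> good Z ->
  (forall x y, dact (Y.2 X.1.1) Z.2 x y = dact (Z.2 X.1.1) Y.2 x y) ->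
  (forall x y, dact (Z.2 Y.1.1) X.2 x y = dact (X.2 Y.1.1) Z.2 x y) ->
  (forall x y, dact (X.2 Z.1.1) Y.2 x y = dact (Y.2 Z.1.1) X.2 x y) ->
  tkk_add (tkk_add (tkk_br X (tkk_br Y Z)) (tkk_br Y (tkk_br Z X))) (tkk_br Z (tkk_br X Y))
  = tkk_zero V.
Proof.
case: X => [[a1 D1] Q1]; case: Y => [[a2 D2] Q2]; case: Z => [[a3 D3] Q3].
move=> [/= d1 q1] [/= d2 q2] [/= d3 q3] /= h1 h2 h3.
apply: tkk_eq => /=.
- rewrite /ecomm !(lB d1, lB d2, lB d3, lD d1, lD d2, lD d3, lN d1, lN d2, lN d3).
  rewrite (bC q1 a2 a3) (bC q2 a3 a1) (bC q3 a1 a2).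
  zring.
- move=> x; rewrite /ecomm /dact.
  rewrite !(lB d1, lB d2, lB d3, lD d1, lD d2, lD d3, lN d1, lN d2, lN d3,
     bBl q1, bBl q2, bBl q3, bDl q1, bDl q2, bDl q3, bNl q1, bNl q2, bNl q3).
  zring.
- move=> x y; move: (h1 x y) (h2 x y) (h3 x y); rewrite /dact /ecomm => e1 e2 e3.
  rewrite !(lB d1, lB d2, lB d3, lD d1, lD d2, lD d3, lN d1, lN d2, lN d3,
     bBl q1, bBl q2, bBl q3, bDl q1, bDl q2, bDl q3, bNl q1, bNl q2, bNl q3,
     bBr q1, bBr q2, bBr q3, bDr q1, bDr q2, bDr q3, bNr q1, bNr q2, bNr q3).
  apply: (combV3 (k1:=1) (k2:=1) (k3:=1) e1 e2 e3). zring.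
Qed.

Lemma tkk_anti (X Y : tkk V) : tkk_br Y X = tkk_scale (-1) (tkk_br X Y).
Proof.
case: X => [[a1 D1] Q1]; case: Y => [[a2 D2] Q2].
apply: tkk_eq => /= [|x|x y]; rewrite ?scaleN1r /ecomm /dact; zring.
Qed.

Lemma tkk_alt (X : tkk V) : tkk_br X X = tkk_zero V.
Proof.
case: X => [[a1 D1] Q1].
apply: tkk_eq => /= [|x|x y]; rewrite /ecomm /dact; zring.
Qed.

Lemma tkk_brDl c (X Y Z : tkk V) : good Z ->
  tkk_br (tkk_add (tkk_scale c X) Y) Z = tkk_add (tkk_scale c (tkk_br X Z)) (tkk_br Y Z).
Proof.
case: X => [[a1 D1] Q1]; case: Y => [[a2 D2] Q2]; case: Z => [[a3 D3] Q3].
move=> [/= d3 q3].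
apply: tkk_eq => /= [|x|x y]; rewrite /ecomm /dact.
- rewrite d3 !scalerBr; zring.
- rewrite d3 (blin q3) !scalerBr !scalerDr; zring.
- rewrite !(lD d3, lB d3, lZ d3, bDl q3, bDr q3, bZl q3, bZr q3) ?scalerBr ?scalerDr ?scalerBr. zring.
Qed.

Lemma tkk_brDr c (X Y Z : tkk V) : good Z ->
  tkk_br Z (tkk_add (tkk_scale c X) Y) = tkk_add (tkk_scale c (tkk_br Z X)) (tkk_br Z Y).
Proof.
case: X => [[a1 D1] Q1]; case: Y => [[a2 D2] Q2]; case: Z => [[a3 D3] Q3].
move=> [/= d3 q3].
apply: tkk_eq => /= [|x|x y]; rewrite /ecomm /dact.
- rewrite d3 !scalerBr; zring.
- rewrite d3 (blin q3) !scalerBr !scalerDr; zring.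
- rewrite !(lD d3, lB d3, lZ d3, bDl q3, bDr q3, bZl q3, bZr q3) ?scalerBr ?scalerDr ?scalerBr; zring.
Qed.

Lemma tkk_addA (X Y Z : tkk V) : tkk_add X (tkk_add Y Z) = tkk_add (tkk_add X Y) Z.
Proof. by apply: tkk_eq => [|x|x y] /=; rewrite addrA. Qed.
Lemma tkk_addC (X Y : tkk V) : tkk_add X Y = tkk_add Y X.
Proof. by apply: tkk_eq => [|x|x y] /=; rewrite addrC. Qed.
Lemma tkk_add0 (X : tkk V) : tkk_add (tkk_zero V) X = X.
Proof. by apply: tkk_eq => [|x|x y] /=; rewrite add0r. Qed.
Lemma tkk_addN (X : tkk V) : tkk_add (tkk_scale (-1) X) X = tkk_zero V.
Proof. by apply: tkk_eq => [|x|x y] /=; rewrite scaleN1r addNr. Qed.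
Lemma tkk_scaleA a b (X : tkk V) : tkk_scale a (tkk_scale b X) = tkk_scale (a * b) X.
Proof. by apply: tkk_eq => [|x|x y] /=; rewrite scalerA. Qed.
Lemma tkk_scale1 (X : tkk V) : tkk_scale 1 X = X.
Proof. by apply: tkk_eq => [|x|x y] /=; rewrite scale1r. Qed.
Lemma tkk_scaleDr a (X Y : tkk V) : tkk_scale a (tkk_add X Y) = tkk_add (tkk_scale a X) (tkk_scale a Y).
Proof. by apply: tkk_eq => [|x|x y] /=; rewrite scalerDr. Qed.
Lemma tkk_scaleDl a b (X : tkk V) : tkk_scale (a + b) X = tkk_add (tkk_scale a X) (tkk_scale b X).
Proof. by apply: tkk_eq => [|x|x y] /=; rewrite scalerDl. Qed.
End TK.

Lemma two_cancelG (K : fieldType) (W : lmodType K) (x : W) : (2%:R : K) != 0 -> x *+ 2 = 0 -> x = 0.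
Proof.
move=> h2 h; have : (2%:R : K) *: x = 0 by rewrite scaler_nat.
by move/eqP; rewrite scaler_eq0 (negbTE h2) /= => /eqP.
Qed.

Section Main.
Variables (K : fieldType) (J M : lmodType K) (mul : J -> J -> J) (act : J -> M -> M) (e : J).
Hypotheses (h2 : (2%:R : K) != 0) (hJ : is_jordan mul) (hu : is_unit mul e)
  (hB : is_bimodule mul act) (hM : forall m : M, act e m = m).

Local Notation V := (J * M)%type.
Local Notation nm := (nse_mul mul act).
Let hV : is_jordan nm := hB.

Definition io (a : J) : V := (a, 0).
Definition LL (u : V) : V -> V := fun v => nm u v.

Lemma act_00 : act 0 0 = 0.
Proof.
have := jmul0l hV ((0 : J), (0 : M)); rewrite /nse_mul /= => /(congr1 snd) /= h.
by apply: (two_cancelG h2); rewrite mulr2n.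
Qed.
Lemma act_x0 x : act x 0 = 0.
Proof.
have := jmul0l hV (x, (0 : M)); rewrite /nse_mul /= => /(congr1 snd) /=.
by rewrite act_00 add0r.
Qed.
Lemma nm_io a b : nm (io a) (io b) = io (mul a b).
Proof. by rewrite /nse_mul /io /= !act_x0 addr0. Qed.
Lemma nm_e v : nm (io e) v = v.
Proof. by case: v => x m; rewrite /nse_mul /io /= hu hM act_x0 addr0. Qed.
Lemma nm_e' v : nm v (io e) = v.
Proof. by rewrite (jmulC hV) nm_e. Qed.
Lemma io_lin c a b : io (c *: a + b) = c *: io a + io b.
Proof. rewrite /io; apply: injective_projections => /=; by rewrite ?scaler0 ?addr0. Qed.
Lemma io_add a b : io (a + b) = io a + io b.
Proof. by have := io_lin 1 a b; rewrite !scale1r. Qed.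
Lemma io_scale c a : io (c *: a) = c *: io a.
Proof. by have := io_lin c a 0; rewrite !addr0. Qed.
Lemma io_opp a : io (- a) = - io a.
Proof. by rewrite -scaleN1r io_scale scaleN1r. Qed.
Lemma io_sub a b : io (a - b) = io a - io b.
Proof. by rewrite io_add io_opp. Qed.
Lemma io0 : io 0 = 0.
Proof. by []. Qed.
Lemma io_inj a b : io a = io b -> a = b.
Proof. by case. Qed.

Lemma LL_lin u : lin1 (LL u).
Proof. by move=> c x y; rewrite /LL !(jmulC hV u) (jmulZDl hV). Qed.
Lemma nm_lin u : lin1 (nm u).
Proof. exact: LL_lin. Qed.

Definition ecL (p q : J) : V -> V := ecomm (LL (io p)) (LL (io q)).
Lemma ecL_lin p q : lin1 (ecL p q).
Proof.
move=> c x y; rewrite /ecL /ecomm !(LL_lin, lD (LL_lin _), lZ (LL_lin _)).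
by rewrite scalerBr; zring.
Qed.

Definition Inn (s : seq (K * (J * J))) (v : V) : V :=
  \sum_(t <- s) t.1 *: ecL t.2.1 t.2.2 v.
Definition Dop (a : J) s (v : V) : V := nm (io a) v + Inn s v.
Definition Qop (b : J) : V -> V -> V := Qf nm (io b).

Lemma Inn_nil v : Inn [::] v = 0.
Proof. by rewrite /Inn big_nil. Qed.
Lemma Inn_cons t s v : Inn (t :: s) v = t.1 *: ecL t.2.1 t.2.2 v + Inn s v.
Proof. by rewrite /Inn big_cons. Qed.
Lemma Inn_cat s s' v : Inn (s ++ s') v = Inn s v + Inn s' v.
Proof. by rewrite /Inn big_cat. Qed.
Definition scl (c : K) (t : K * (J * J)) := (c * t.1, t.2).
Lemma Inn_scl c s v : Inn (map (scl c) s) v = c *: Inn s v.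
Proof. by rewrite /Inn big_map scaler_sumr; apply: eq_bigr => t _; rewrite scalerA. Qed.

Lemma Inn_lin s : lin1 (Inn s).
Proof.
elim: s => [|t s IH] c x y; first by rewrite !Inn_nil scaler0 addr0.
rewrite !Inn_cons IH ecL_lin !scalerDr !scalerA (mulrC c t.1); zring.
Qed.
Lemma Dop_lin a s : lin1 (Dop a s).
Proof.
move=> c x y; rewrite /Dop (nm_lin (io a)) (Inn_lin s) scalerDr; zring.
Qed.

Lemma Qop_bil b : bil (Qop b).
Proof.
split=> [c x y z|x y]; rewrite /Qop /Qf.
- rewrite !(jmulZDl hV, jmulDr hV, jmulZr hV, jmulZl hV, jmulDl hV) scalerBr scalerDr; zring.
- rewrite (jmulC hV x y) (jmulC hV (nm (io b) x) y) (jmulC hV x (nm (io b) y)); zring.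
Qed.

Lemma Qop_linb c b b' x y : Qop (c *: b + b') x y = c *: Qop b x y + Qop b' x y.
Proof.
rewrite /Qop /Qf io_lin !(jmulZDl hV, jmulDr hV, jmulZr hV, jmulZl hV, jmulDl hV) scalerBr scalerDr; zring.
Qed.
Lemma Qop_addb b b' x y : Qop (b + b') x y = Qop b x y + Qop b' x y.
Proof. by have := Qop_linb 1 b b' x y; rewrite !scale1r. Qed.
Lemma Qop_scaleb c b x y : Qop (c *: b) x y = c *: Qop b x y.
Proof. have q0 : Qop 0 x y = 0 by rewrite /Qop /Qf io0 !(jmul0l hV, jmul0r hV) ?addr0 ?subr0.
by have := Qop_linb c b 0 x y; rewrite !addr0 q0 addr0. Qed.
Lemma Qop_oppb b x y : Qop (- b) x y = - Qop b x y.
Proof. by rewrite -scaleN1r Qop_scaleb scaleN1r. Qed.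
Lemma Qop_subb b b' x y : Qop (b - b') x y = Qop b x y - Qop b' x y.
Proof. by rewrite Qop_addb Qop_oppb. Qed.
Lemma Qop0 x y : Qop 0 x y = 0.
Proof. by have := Qop_scaleb 0 0 x y; rewrite !scale0r. Qed.

Definition isDer (D : V -> V) := forall x y, D (nm x y) = nm (D x) y + nm x (D y).

Lemma ecL_der p q : isDer (ecL p q).
Proof.
move=> x y; rewrite /ecL /ecomm /LL.
rewrite (jmulBl hV) (jmulBr hV) (DER0 hV h2).
rewrite !(jmulC hV _ y) !(jmulC hV _ x); zring.
Qed.

Lemma Inn_der s : isDer (Inn s).
Proof.
elim: s => [|t s IH] x y.
  by rewrite !Inn_nil (jmul0l hV) (jmul0r hV) addr0.
rewrite !Inn_cons ecL_der IH !(jmulDl hV, jmulDr hV, jmulZl hV, jmulZr hV) scalerDr; zring.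
Qed.

Lemma derL D : isDer D -> forall u v, ecomm D (LL u) v = LL (D u) v.
Proof. by move=> hD u v; rewrite /ecomm /LL hD addrK. Qed.

Lemma der_ecL D : isDer D -> lin1 D -> forall p q v,
  ecomm D (ecL p q) v = ecomm (LL (D (io p))) (LL (io q)) v + ecomm (LL (io p)) (LL (D (io q))) v.
Proof.
move=> hD lD' p q v; rewrite /ecL /ecomm /LL (lB lD') !hD !(jmulDr hV); zring.
Qed.

Lemma der_dact D : isDer D -> lin1 D -> forall u x y, dact D (Qf nm u) x y = Qf nm (D u) x y.
Proof.
move=> hD lD' u x y; rewrite /dact /Qf (lB lD') (lD lD') !hD !(jmulDl hV, jmulDr hV); zring.
Qed.

Lemma dact_LQ a b x y : dact (LL (io a)) (Qop b) x y = - Qop (mul a b) x y.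
Proof. by rewrite /dact /LL /Qop -nm_io -(JID2 hV h2). Qed.

Definition IJ (s : seq (K * (J * J))) (x : J) : J :=
  \sum_(t <- s) t.1 *: (mul t.2.1 (mul t.2.2 x) - mul t.2.2 (mul t.2.1 x)).

Lemma Inn_io s x : Inn s (io x) = io (IJ s x).
Proof.
elim: s => [|t s IH]; first by rewrite Inn_nil /IJ big_nil.
rewrite Inn_cons IH /IJ big_cons -/(IJ s x) io_lin; congr (_ *: _ + _).
by rewrite /ecL /ecomm /LL !nm_io io_sub.
Qed.
Lemma Dop_io a s x : Dop a s (io x) = io (mul a x + IJ s x).
Proof. by rewrite /Dop Inn_io nm_io io_add. Qed.
Lemma Qop_io b x y : Qop b (io x) (io y) = io (Qf mul b x y).
Proof. by rewrite /Qop /Qf !nm_io io_sub io_add. Qed.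

Lemma Dop_add a s a' s' v : Dop a s v + Dop a' s' v = Dop (a + a') (s ++ s') v.
Proof. rewrite /Dop Inn_cat io_add (jmulDl hV); zring. Qed.
Lemma Dop_scale c a s v : c *: Dop a s v = Dop (c *: a) (map (scl c) s) v.
Proof. by rewrite /Dop Inn_scl io_scale (jmulZl hV) scalerDr. Qed.

Definition sdiff s (s' : seq (K * (J * J))) : seq (K * (J * J)) :=
  flatten (map (fun t => [:: (t.1, (IJ s t.2.1, t.2.2)); (t.1, (t.2.1, IJ s t.2.2))]) s').

Lemma InnInn s s' v : Inn s (Inn s' v) - Inn s' (Inn s v) = Inn (sdiff s s') v.
Proof.
elim: s' => [|t s' IH].
  by rewrite /sdiff /= !Inn_nil (l0 (Inn_lin s)) subrr.
have h : Inn s (ecL t.2.1 t.2.2 v) - ecL t.2.1 t.2.2 (Inn s v)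
   = ecL (IJ s t.2.1) t.2.2 v + ecL t.2.1 (IJ s t.2.2) v.
  by rewrite /ecL -!Inn_io; exact: (der_ecL (Inn_der s) (Inn_lin s)).
rewrite /sdiff /= -/(sdiff s s') ?Inn_cat !Inn_cons ?Inn_nil -IH.
rewrite (lD (Inn_lin s)) (lZ (Inn_lin s)) /=.
set A := ecL (IJ s t.2.1) t.2.2 v in h *; set B := ecL t.2.1 (IJ s t.2.2) v in h *.
set C := Inn s (ecL t.2.1 t.2.2 v) in h *; set E := ecL t.2.1 t.2.2 (Inn s v) in h *.
clearbody A B C E.
have h' := congr1 (fun w => t.1 *: w) h; rewrite /= !scalerDr scalerN in h'.
apply/eqP; rewrite -subr_eq0; apply/eqP.
apply: (combV3 (k1:=1) (k2:=0) (k3:=0) h' h' h'); zring.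
Qed.

Lemma ecomm_Dop a s a' s' v :
  ecomm (Dop a s) (Dop a' s') v = Dop (IJ s a' - IJ s' a) ((1, (a, a')) :: sdiff s s') v.
Proof.
have e1 := derL (Inn_der s) (io a') v.
have e2 := derL (Inn_der s') (io a) v.
have e3 := InnInn s s' v.
move: e1 e2; rewrite /ecomm /LL !Inn_io => e1 e2.
rewrite /ecomm /Dop Inn_cons !(nm_lin _ 1, lD (nm_lin _), lD (Inn_lin _)) io_sub (jmulBl hV) scale1r.
rewrite /ecL /ecomm /LL.
apply/eqP; rewrite -subr_eq0; apply/eqP.
apply: (combV3 (k1:=1) (k2:=-1) (k3:=1) e1 e2 e3); zring.
Qed.

Lemma Qop_pt b u v : Qop b (io u) v = Dop (mul b u) [:: (1, (u, b))] v.
Proof.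
rewrite /Qop /Qf /Dop Inn_cons Inn_nil scale1r addr0 -nm_io /ecL /ecomm /LL; zring.
Qed.

Lemma dact_Dop a s b x y : dact (Dop a s) (Qop b) x y = Qop (IJ s b - mul a b) x y.
Proof.
have e1 := dact_LQ a b x y.
have e2 := der_dact (Inn_der s) (Inn_lin s) (io b) x y.
move: e1 e2; rewrite Inn_io -/(Qop (IJ s b)) /dact /LL => e1 e2.
rewrite /dact /Dop !(bDl (Qop_bil b), bDr (Qop_bil b)) Qop_subb.
rewrite -e2 -/(Qop b) (_ : Qop (mul a b) x y = - (nm (io a) (Qop b x y) - Qop b (nm (io a) x) y - Qop b x (nm (io a) y))); first by zring.
by rewrite e1 opprK.
Qed.

Definition Egood (X : tkk V) : Prop :=
  exists u a s b, X = (io u, Dop a s, Qop b).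

Lemma Egood_good X : Egood X -> good X.
Proof. by case=> u [a [s [b ->]]]; split; [exact: Dop_lin | exact: Qop_bil]. Qed.

Lemma Egood_zero : Egood (tkk_zero V).
Proof.
exists 0, 0, [::], 0; apply: tkk_eq => /= [|x|x y]; first by [].
  by rewrite /Dop Inn_nil io0 (jmul0l hV) addr0.
by rewrite Qop0.
Qed.

Lemma Egood_add X Y : Egood X -> Egood Y -> Egood (tkk_add X Y).
Proof.
case=> u [a [s [b ->]]]; case=> u' [a' [s' [b' ->]]].
exists (u + u'), (a + a'), (s ++ s'), (b + b'); apply: tkk_eq => /= [|x|x y].
- by rewrite io_add.
- by rewrite Dop_add.
- by rewrite Qop_addb.
Qed.

Lemma Egood_scale c X : Egood X -> Egood (tkk_scale c X).
Proof.
case=> u [a [s [b ->]]].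
exists (c *: u), (c *: a), (map (scl c) s), (c *: b); apply: tkk_eq => /= [|x|x y].
- by rewrite io_scale.
- by rewrite Dop_scale.
- by rewrite Qop_scaleb.
Qed.

Lemma Qop_ptf b u : Qop b (io u) = Dop (mul b u) [:: (1, (u, b))].
Proof. by apply: funext => v; rewrite Qop_pt. Qed.

Lemma Egood_br X Y : Egood X -> Egood Y -> Egood (tkk_br X Y).
Proof.
case=> u [a [s [b ->]]]; case=> u' [a' [s' [b' ->]]].
rewrite /tkk_br.
exists (mul a u' + IJ s u' - (mul a' u + IJ s' u)),
  (IJ s a' - IJ s' a + mul b u' + (-1) *: mul b' u),
  ((((1, (a, a')) :: sdiff s s') ++ [:: (1, (u', b))]) ++ map (scl (-1)) [:: (1, (u, b'))]),
  ((IJ s b' - mul a b') - (IJ s' b - mul a' b)).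
apply: tkk_eq => [|x|x y]; cbn [fst snd].
- by rewrite !Dop_io io_sub.
- by rewrite ecomm_Dop !Qop_ptf -!Dop_add -Dop_scale scaleN1r.
- by rewrite !dact_Dop [in RHS]Qop_subb.
Qed.

Lemma Egood_jac X Y Z : Egood X -> Egood Y -> Egood Z ->
  forall x y, dact (Y.2 X.1.1) Z.2 x y = dact (Z.2 X.1.1) Y.2 x y.
Proof.
case=> u [a [s [b ->]]]; case=> u' [a' [s' [b' ->]]]; case=> u'' [a'' [s'' [b'' ->]]] x y /=.
rewrite !Qop_ptf !dact_Dop; congr (Qop _ x y).
rewrite /IJ !big_cons !big_nil /= !scale1r !addr0.
rewrite (jmulC hJ b' b'') (jmulC hJ (mul b' u) b'') (jmulC hJ (mul b'' u) b') (jmulC hJ b' u) (jmulC hJ b'' u).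
zring.
Qed.
End Main.

Definition Et (K : fieldType) (J M : lmodType K) (mul : J -> J -> J) (act : J -> M -> M)
  (hB : is_bimodule mul act) : Type := {X : tkk (J * M)%type | Egood mul act X}.

Section EtS.
Variables (K : fieldType) (J M : lmodType K) (mul : J -> J -> J) (act : J -> M -> M)
  (hB : is_bimodule mul act).
Local Notation E := (Et hB).
Definition Et_val (x : E) : tkk (J * M)%type := proj1_sig x.
Lemma Et_eq (x y : E) : Et_val x = Et_val y -> x = y.
Proof.
case: x => X pX; case: y => Y pY /= eXY; move: pX pY; rewrite eXY => pX pY.
by rewrite (Prop_irrelevance pX pY).
Qed.
Definition Et_zero : E := exist _ (tkk_zero _) (Egood_zero hB).
Definition Et_add (x y : E) : E :=
  exist _ (tkk_add (Et_val x) (Et_val y)) (Egood_add hB (proj2_sig x) (proj2_sig y)).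
Definition Et_scale (c : K) (x : E) : E :=
  exist _ (tkk_scale c (Et_val x)) (Egood_scale hB c (proj2_sig x)).
Definition Et_opp (x : E) : E := Et_scale (-1) x.
End EtS.

HB.instance Definition _ K J M mul act hB := gen_eqMixin (@Et K J M mul act hB).
HB.instance Definition _ K J M mul act hB := gen_choiceMixin (@Et K J M mul act hB).

Section EtS2.
Variables (K : fieldType) (J M : lmodType K) (mul : J -> J -> J) (act : J -> M -> M)
  (hB : is_bimodule mul act).
Local Notation E := (Et hB).
Lemma Et_addA : associative (@Et_add _ _ _ _ _ hB).
Proof. by move=> x y z; apply: Et_eq; rewrite /= tkk_addA. Qed.
Lemma Et_addC : commutative (@Et_add _ _ _ _ _ hB).
Proof. by move=> x y; apply: Et_eq; rewrite /= tkk_addC. Qed.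
Lemma Et_add0 : left_id (Et_zero hB) (@Et_add _ _ _ _ _ hB).
Proof. by move=> x; apply: Et_eq; rewrite /= tkk_add0. Qed.
Lemma Et_addN : left_inverse (Et_zero hB) (@Et_opp _ _ _ _ _ hB) (@Et_add _ _ _ _ _ hB).
Proof. by move=> x; apply: Et_eq; rewrite /= tkk_addN. Qed.
End EtS2.

HB.instance Definition _ K J M mul act hB :=
  GRing.isZmodule.Build (@Et K J M mul act hB) (@Et_addA K J M mul act hB) (@Et_addC K J M mul act hB)
    (@Et_add0 K J M mul act hB) (@Et_addN K J M mul act hB).

Section EtS3.
Variables (K : fieldType) (J M : lmodType K) (mul : J -> J -> J) (act : J -> M -> M)
  (hB : is_bimodule mul act).
Lemma Et_scaleA a b (v : Et hB) : Et_scale a (Et_scale b v) = Et_scale (a * b) v.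
Proof. by apply: Et_eq; rewrite /= tkk_scaleA. Qed.
Lemma Et_scale1 : left_id 1 (@Et_scale _ _ _ _ _ hB).
Proof. by move=> v; apply: Et_eq; rewrite /= tkk_scale1. Qed.
Lemma Et_scaleDr : right_distributive (@Et_scale _ _ _ _ _ hB) +%R.
Proof. by move=> a u v; apply: Et_eq; rewrite /= tkk_scaleDr. Qed.
Lemma Et_scaleDl (v : Et hB) : {morph (@Et_scale _ _ _ _ _ hB)^~ v : a b / a + b}.
Proof. by move=> a b; apply: Et_eq; rewrite /= tkk_scaleDl. Qed.
End EtS3.

HB.instance Definition _ (K : fieldType) (J M : lmodType K) (mul : J -> J -> J) (act : J -> M -> M) (hB : is_bimodule mul act) :=
  GRing.Zmodule_isLmodule.Build K (@Et K J M mul act hB) (@Et_scaleA K J M mul act hB)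
    (@Et_scale1 K J M mul act hB) (@Et_scaleDr K J M mul act hB) (@Et_scaleDl K J M mul act hB).


Lemma span1_list (K : fieldType) (W : lmodType K) (gens : (W -> W) -> Prop)
  (d : K * (W -> W)) (l : seq (K * (W -> W))) (D : W -> W) :
  (forall i, gens (nth d l i).2) -> (forall x, D x = \sum_(t <- l) t.1 *: t.2 x) ->
  in_span1 gens D.
Proof.
move=> hg hD; exists (size l), (fun i => (nth d l i).1), (fun i => (nth d l i).2).
by split=> // x; rewrite hD (big_nth d) big_mkord.
Qed.

Lemma nth_gens (K : fieldType) (W : lmodType K) (T : Type) (gens : (W -> W) -> Prop)
  (d : K * (W -> W)) (h : K * (W -> W)) (f : T -> K * (W -> W)) (t0 : T) (s : seq T) :
  gens d.2 -> gens h.2 -> (forall t, gens (f t).2) -> forall i, gens (nth d (h :: map f s) i).2.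
Proof.
move=> hd hh hf [|i] //=.
case: (ltnP i (size s)) => hi; first by rewrite (nth_map t0).
by rewrite nth_default ?size_map.
Qed.

Section Final.
Variables (K : fieldType) (J M : lmodType K) (mul : J -> J -> J) (act : J -> M -> M) (e : J).
Hypotheses (h2 : (2%:R : K) != 0) (hJ : is_jordan mul) (hu : is_unit mul e)
  (hB : is_bimodule mul act) (hM : forall m : M, act e m = m).
Local Notation V := (J * M)%type.
Local Notation nm := (nse_mul mul act).
Let hV : is_jordan nm := hB.
Local Notation E := (Et hB).

Definition Et_br (x y : E) : E :=
  exist _ (tkk_br (Et_val x) (Et_val y)) (Egood_br h2 hB (proj2_sig x) (proj2_sig y)).

Lemma Et_brDl c (x y z : E) : Et_br (c *: x + y) z = c *: Et_br x z + Et_br y z.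
Proof.
have -> : c *: x + y = Et_add (Et_scale c x) y by [].
have -> : c *: Et_br x z + Et_br y z = Et_add (Et_scale c (Et_br x z)) (Et_br y z) by [].
apply: Et_eq; change (tkk_br (tkk_add (tkk_scale c (Et_val x)) (Et_val y)) (Et_val z) =
  tkk_add (tkk_scale c (tkk_br (Et_val x) (Et_val z))) (tkk_br (Et_val y) (Et_val z))).
by rewrite tkk_brDl //; exact: (Egood_good hB (proj2_sig z)).
Qed.
Lemma Et_brDr c (x y z : E) : Et_br z (c *: x + y) = c *: Et_br z x + Et_br z y.
Proof.
have -> : c *: x + y = Et_add (Et_scale c x) y by [].
have -> : c *: Et_br z x + Et_br z y = Et_add (Et_scale c (Et_br z x)) (Et_br z y) by [].
apply: Et_eq; change (tkk_br (Et_val z) (tkk_add (tkk_scale c (Et_val x)) (Et_val y)) =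
  tkk_add (tkk_scale c (tkk_br (Et_val z) (Et_val x))) (tkk_br (Et_val z) (Et_val y))).
by rewrite tkk_brDr //; exact: (Egood_good hB (proj2_sig z)).
Qed.
Lemma Et_alt (x : E) : Et_br x x = 0.
Proof. by apply: Et_eq; change (tkk_br (Et_val x) (Et_val x) = tkk_zero _); rewrite tkk_alt. Qed.
Lemma Et_jac (x y z : E) : Et_br x (Et_br y z) + Et_br y (Et_br z x) + Et_br z (Et_br x y) = 0.
Proof.
have -> : forall a b c : E, a + b + c = Et_add (Et_add a b) c by [].
apply: Et_eq.
case: x => X pX; case: y => Y pY; case: z => Z pZ.
change (tkk_add (tkk_add (tkk_br X (tkk_br Y Z)) (tkk_br Y (tkk_br Z X))) (tkk_br Z (tkk_br X Y)) = tkk_zero _).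
apply: tkk_jacobi; try exact: (Egood_good hB).
- exact (Egood_jac h2 hJ hB pX pY pZ).
- exact (Egood_jac h2 hJ hB pY pZ pX).
- exact (Egood_jac h2 hJ hB pZ pX pY).
Qed.

Definition Elie : lieAlgType K := LieAlg Et_brDl Et_brDr Et_alt Et_jac.

Local Notation EL := Elie.
Definition phi (x : EL) : tkk J := tkk_proj (Et_val x).

Lemma Dop_io' a s x : Dop mul act a s (x, 0) = (mul a x + IJ mul s x, 0).
Proof. exact: (Dop_io h2 hB a s x). Qed.
Lemma Qop_io' b x y : Qop mul act b (x, 0) (y, 0) = (Qf mul b x y, 0).
Proof. exact: (Qop_io h2 hB b x y). Qed.

Lemma Inn_io' s x : Inn mul act s (x, 0) = (IJ mul s x, 0).
Proof. exact: (Inn_io h2 hB s x). Qed.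

Lemma proj_E u a s b : tkk_proj (io M u, Dop mul act a s, Qop mul act b)
  = (u, fun x => mul a x + IJ mul s x, fun x y => Qf mul b x y).
Proof.
by apply: tkk_eq => [|x|x y]; cbn [fst snd tkk_proj]; rewrite ?Dop_io' ?Qop_io'.
Qed.

Lemma spanJ1 a s : in_span1 (g0_gen mul) (fun x => mul a x + IJ mul s x).
Proof.
apply: (@span1_list _ _ _ (0, Lmul mul 0)
  ((1, Lmul mul a) :: map (fun t => (t.1, ecomm (Lmul mul t.2.1) (Lmul mul t.2.2))) s)).
- apply: (nth_gens (0 : K, (0 : J, 0 : J))) => [||t]; rewrite /g0_gen /=;
    [left; exists 0 | left; exists a | right; exists t.2.1, t.2.2] => //.
- by move=> x; rewrite big_cons big_map scale1r /IJ.
Qed.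

Lemma spanJ2 b : in_span2 (g1_gen mul) (fun x y => Qf mul b x y).
Proof.
exists 1%N, (fun _ => -1), (fun _ => dact (Lmul mul b) mul); split.
  by move=> _; rewrite /g1_gen; right; exists b.
by move=> x y; rewrite big_ord1 scaleN1r /dact /Lmul /Qf; zring.
Qed.

Lemma spanV1 a s : in_span1 (g0_gen nm) (Dop mul act a s).
Proof.
apply: (@span1_list _ _ _ (0, Lmul nm 0)
  ((1, Lmul nm (io M a)) :: map (fun t => (t.1, ecomm (Lmul nm (io M t.2.1)) (Lmul nm (io M t.2.2)))) s)).
- apply: (nth_gens (0 : K, (0 : J, 0 : J))) => [||t]; rewrite /g0_gen /=;
    [left; exists 0 | left; exists (io M a) | right; exists (io M t.2.1), (io M t.2.2)] => //.
- by move=> x; rewrite big_cons big_map scale1r.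
Qed.

Lemma spanV2 b : in_span2 (g1_gen nm) (Qop mul act b).
Proof.
exists 1%N, (fun _ => -1), (fun _ => dact (Lmul nm (io M b)) nm); split.
  by move=> _; rewrite /g1_gen; right; exists (io M b).
by move=> x y; rewrite big_ord1 scaleN1r /dact /Lmul /Qop /Qf; zring.
Qed.

Lemma phi_br (x y : EL) : phi (lie_br EL x y) = tkk_br (phi x) (phi y).
Proof.
case: x => X [u [a [s [b eX]]]]; case: y => Y [u' [a' [s' [b' eY]]]].
rewrite /phi /=; rewrite eX eY.
apply: tkk_eq => [|x|x y] /=; rewrite /ecomm /dact;
  rewrite /io ?(Dop_io', Qop_io') //= !Inn_io' /= ?Inn_io' /= /Qf //.
Qed.

Lemma Dspan D : in_span1 (g0_gen mul) D -> exists a s, forall x, D x = mul a x + IJ mul s x.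
Proof.
case=> n [c [g [hg hD]]].
suff [a [s h]] : exists a s, forall x, \sum_(i < n) c i *: g i x = mul a x + IJ mul s x.
  by exists a, s => x; rewrite hD h.
clear hD; elim: n c g hg => [|n IH] c g hg.
  by exists 0, [::] => x; rewrite big_ord0 (jmul0l hJ) /IJ big_nil addr0.
have [a [s h]] := IH (fun i => c (widen_ord (leqnSn n) i)) (fun i => g (widen_ord (leqnSn n) i)) (fun i => hg _).
case: (hg ord_max) => [[p hp] | [p [q hpq]]].
- exists (c ord_max *: p + a), s => x; rewrite big_ord_recr /= h hp /Lmul (jmulZDl hJ); zring.
- exists a, (s ++ [:: (c ord_max, (p, q))]) => x.
  rewrite big_ord_recr /= h hpq /IJ big_cat big_seq1 /= /ecomm /Lmul; zring.
Qed.

Lemma Qf_e x y : Qf mul e x y = mul x y.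
Proof. by rewrite /Qf !hu addrK. Qed.

Lemma Qspan Q : in_span2 (g1_gen mul) Q -> exists b, forall x y, Q x y = Qf mul b x y.
Proof.
case=> n [c [g [hg hQ]]].
suff [b h] : exists b, forall x y, \sum_(i < n) c i *: g i x y = Qf mul b x y.
  by exists b => x y; rewrite hQ h.
clear hQ; elim: n c g hg => [|n IH] c g hg.
  by exists 0 => x y; rewrite big_ord0 /Qf !(jmul0l hJ, jmul0r hJ) addr0 subr0.
have [b h] := IH (fun i => c (widen_ord (leqnSn n) i)) (fun i => g (widen_ord (leqnSn n) i)) (fun i => hg _).
case: (hg ord_max) => [hp | [p hp]].
- exists (c ord_max *: e + b) => x y; rewrite big_ord_recr /= h hp (Qf_linb hJ) Qf_e; zring.
- exists (c ord_max *: (- p) + b) => x y; rewrite big_ord_recr /= h hp (Qf_linb hJ).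
  have -> : Qf mul (- p) x y = - Qf mul p x y by rewrite /Qf !(jmulNl hJ, jmulNr hJ); zring.
  rewrite /Qf /dact /Lmul scalerN; zring.
Qed.

Lemma phi_surj X : in_Lie mul X -> exists x : EL, phi x = X.
Proof.
case: X => [[a0 D] Q] [/= hD hQ].
have [a [s hs]] := Dspan hD; have [b hb] := Qspan hQ.
have pE : Egood mul act (io M a0, Dop mul act a s, Qop mul act b) by exists a0, a, s, b.
exists (exist _ _ pE : E).
change (tkk_proj (io M a0, Dop mul act a s, Qop mul act b) = (a0, D, Q)).
rewrite proj_E; apply: tkk_eq => [|x|x y] //=; by rewrite ?hs ?hb.
Qed.

Lemma IJ0 s : IJ mul s 0 = 0.
Proof. by rewrite /IJ big1 // => t _; rewrite !(jmul0r hJ) subrr scaler0. Qed.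
Lemma IJ_e s : IJ mul s e = 0.
Proof.
rewrite /IJ big1 // => t _; rewrite !(jmulC hJ _ e) !hu (jmulC hJ t.2.1) subrr scaler0 //.
Qed.
Lemma ecL0l q x : ecL mul act 0 q x = 0.
Proof. by rewrite /ecL /ecomm /LL io0 !(jmul0l hV, jmul0r hV) subrr. Qed.
Lemma ecL0r p x : ecL mul act p 0 x = 0.
Proof. by rewrite /ecL /ecomm /LL io0 !(jmul0l hV, jmul0r hV) subrr. Qed.
Lemma Inn_sdiff0 s s' x : (forall p, IJ mul s p = 0) -> Inn mul act (sdiff mul s s') x = 0.
Proof.
move=> h; elim: s' => [|t s' IH]; first by rewrite /sdiff /= Inn_nil.
by rewrite /sdiff /= -/(sdiff mul s s') !Inn_cons !h ecL0l ecL0r IH !scaler0 !add0r.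
Qed.

Lemma phi_ker (z : EL) : phi z = tkk_zero J -> forall y : EL, lie_br EL z y = 0.
Proof.
case: z => Z pZ; case: (pZ) => u [a [s [b eZ]]] hz y.
change (tkk_proj Z = tkk_zero J) in hz; rewrite eZ proj_E in hz.
have hu0 : u = 0 := congr1 (fun T => T.1.1) hz.
have hD0 : forall x, mul a x + IJ mul s x = 0 := fun x => congr1 (fun T => T.1.2 x) hz.
have hQ0 : forall x y, Qf mul b x y = 0 := fun x y => congr1 (fun T => T.2 x y) hz.
have ha0 : a = 0 by have := hD0 e; rewrite IJ_e addr0 (jmulC hJ) hu.
have hb0 : b = 0.
  by have := hQ0 e e; rewrite /Qf (jmulC hJ b e) !hu addrAC subrr add0r.
have hIJ : forall p, IJ mul s p = 0 by move=> p; have := hD0 p; rewrite ha0 (jmul0l hJ) add0r.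
apply: Et_eq.
change (tkk_br Z (Et_val y) = tkk_zero _).
case: y => Y [u' [a' [s' [b' eY]]]] /=.
rewrite eZ eY hu0 ha0 hb0 /tkk_br.
apply: tkk_eq => [|x|x y]; cbn [fst snd].
- by rewrite !(Dop_io h2 hB) hIJ IJ0 (jmul0l hJ) (jmul0r hJ) addr0 subrr.
- have hio : io M (0 : J) = 0 by [].
  rewrite (ecomm_Dop h2 hB) hIJ IJ0 subrr (Qop0 hB) hio (b0l (Qop_bil hB b')).
  rewrite /Dop hio (jmul0l hV) Inn_cons ecL0l Inn_sdiff0 //.
  by rewrite /= scaler0 !addr0 subr0.
- by rewrite !(dact_Dop h2 hB) hIJ IJ0 (jmul0l hJ) (jmul0r hJ) !subrr ?(Qop0 hB) ?subrr.
Qed.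

Lemma phi_central : central_ext mul phi.
Proof.
split.
- split.
  + by move=> c x y.
  + case=> X [u [a [s [b eX]]]].
    change (in_Lie mul (tkk_proj X)); rewrite eX proj_E; split; [exact: spanJ1 | exact: spanJ2].
  + exact: phi_br.
- exact: phi_surj.
- exact: phi_ker.
Qed.
End Final.

Unset Implicit Arguments.

Theorem mainTheorem7 (K : fieldType) (J : lmodType K) (mul : J -> J -> J) (e : J)
  (M : lmodType K) (act : J -> M -> M) (G : lieAlgType K) (gamma : G -> tkk J) :
  (2%:R : K) != 0 ->
  is_jordan mul -> is_unit mul e ->
  is_bimodule mul act -> (forall m : M, act e m = m) ->
  universal_central_ext mul gamma ->
  exists s : G -> tkk (J * M)%type,
    tkk_hom (nse_mul mul act) s /\ forall x, tkk_proj (s x) = gamma x.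
Proof.
move=> h2 hJ hu hB hM [hce huniv].
have [f [[hfl hfb] hfg _]] := huniv (Elie h2 hJ hB) (@phi _ _ _ _ _ h2 hJ hB) (phi_central h2 hJ hu hB).
exists (fun g => Et_val (f g)); split.
- split.
  + by move=> c x y; rewrite hfl.
  + move=> x; case: (proj2_sig (f x)) => u [a [s [b eX]]].
    rewrite /Et_val eX; split; [exact: spanV1 | exact: spanV2].
  + by move=> x y; rewrite hfb.
- move=> x; exact: hfg x.
Qed.
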